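(* Let $N\geqslant 2$, $1<p<N$, $p<q<p+\frac{p^2}{N}$, $a,\mu>0$ with $\mu a^{q(1-\gamma_{q})}<\alpha(N,p,q)$, and let \[h(t)=\frac{1}{p}t^p-\frac{\mu}{q}C_{N,p,q}a^{q(1-\gamma_{q})}t^{q\gamma_{q}}-\frac{1}{p^*S^{p^*/p}}t^{p^*},\quad t>0.\] Then $h$ has exactly two critical points on $(0,\infty)$, one a local minimum at negative level and the other a global maximum at positive level. In addition, there exist $R_{1}>R_{0}>0$ such that $h(R_{0})=h(R_{1})=0$, and $h(t)>0$ if and only if $t\in(R_{0},R_{1})$.
   Context: $p^*=\frac{Np}{N-p}$, $\gamma_{q}=\frac{N(q-p)}{pq}$. $S$ is the optimal constant in $S\lVert u\rVert_{p^*}^p\leqslant\lVert\nabla u\rVert_p^p$; $C_{N,p,q}$ is the optimal constant in $\lVert u\rVert_q^q\leqslant C_{N,p,q}\lVert\nabla u\rVert_p^{q\gamma_q}\lVert u\rVert_p^{q(1-\gamma_q)}$. $\alpha(N,p,q)=\min\{C',C''\}$ with $C'=\Big(\frac{p^*S^{p^*/p}(p-q\gamma_{q})}{p(p^*-q\gamma_{q})}\Big)^{\frac{p-q\gamma_{q}}{p^*-p}}\frac{q(p^*-p)}{pC_{N,p,q}(p^*-q\gamma_{q})}$, $C''=\frac{pp^*}{N\gamma_{q}C_{N,p,q}(p^*-p)}\Big(\frac{q\gamma_{q}S^{N/p}}{p-q\gamma_{q}}\Big)^{\frac{p-q\gamma_{q}}{p}}$. *)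

(* Defs.v *)
From Stdlib Require Export Reals.
Open Scope R_scope.

Definition pstar (N : nat) (p : R) : R := INR N * p / (INR N - p).

Definition gammaq (N : nat) (p q : R) : R := INR N * (q - p) / (p * q).

(* C' ; S = Sobolev constant, C = Gagliardo-Nirenberg constant C_{N,p,q} *)
Definition Cprime (N : nat) (p q S C : R) : R :=
  let ps := pstar N p in
  let g := gammaq N p q in
  Rpower (ps * Rpower S (ps / p) * (p - q * g) / (p * (ps - q * g)))
         ((p - q * g) / (ps - p))
  * (q * (ps - p) / (p * C * (ps - q * g))).

Definition Csecond (N : nat) (p q S C : R) : R :=
  let ps := pstar N p in
  let g := gammaq N p q in
  p * ps / (INR N * g * C * (ps - p))
  * Rpower (q * g * Rpower S (INR N / p) / (p - q * g)) ((p - q * g) / p).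

Definition alpha (N : nat) (p q S C : R) : R :=
  Rmin (Cprime N p q S C) (Csecond N p q S C).

Definition hfun (N : nat) (p q S C a mu : R) (t : R) : R :=
  let ps := pstar N p in
  let g := gammaq N p q in
  1 / p * Rpower t p
  - mu / q * C * Rpower a (q * (1 - g)) * Rpower t (q * g)
  - 1 / (ps * Rpower S (ps / p)) * Rpower t ps.

(* Main.v *)
Require Import Defs.
From Stdlib Require Import Reals Lra Psatz Ranalysis5 FunctionalExtensionality.
Open Scope R_scope.

Lemma Rpow_pos x y : 0 < Rpower x y.
Proof. unfold Rpower; apply exp_pos. Qed.

Lemma dpow3 (K1 K2 K3 a b c t : R) : 0 < t ->
  derivable_pt_lim (fun x => K1 * Rpower x a - K2 * Rpower x b - K3 * Rpower x c) t
    (K1 * (a * Rpower t (a-1)) - K2 * (b * Rpower t (b-1)) - K3 * (c * Rpower t (c-1))).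
Proof.
  intro Ht.
  apply (derivable_pt_lim_minus (fun x => K1 * Rpower x a - K2 * Rpower x b) (fun x => K3 * Rpower x c)).
  - apply (derivable_pt_lim_minus (fun x => K1 * Rpower x a) (fun x => K2 * Rpower x b)).
    + apply (derivable_pt_lim_scal (fun x => Rpower x a)). now apply derivable_pt_lim_power.
    + apply (derivable_pt_lim_scal (fun x => Rpower x b)). now apply derivable_pt_lim_power.
  - apply (derivable_pt_lim_scal (fun x => Rpower x c)). now apply derivable_pt_lim_power.
Qed.

Lemma dpow2 (K1 K2 K3 a b t : R) : 0 < t ->
  derivable_pt_lim (fun x => K1 * Rpower x a - K2 * Rpower x b - K3) t
    (K1 * (a * Rpower t (a-1)) - K2 * (b * Rpower t (b-1))).
Proof.
  intro Ht.
  replace (K1 * (a * Rpower t (a-1)) - K2 * (b * Rpower t (b-1))) with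
    (K1 * (a * Rpower t (a-1)) - K2 * (b * Rpower t (b-1)) - 0) by ring.
  apply (derivable_pt_lim_minus (fun x => K1 * Rpower x a - K2 * Rpower x b) (fct_cte K3)).
  - apply (derivable_pt_lim_minus (fun x => K1 * Rpower x a) (fun x => K2 * Rpower x b)).
    + apply (derivable_pt_lim_scal (fun x => Rpower x a)). now apply derivable_pt_lim_power.
    + apply (derivable_pt_lim_scal (fun x => Rpower x b)). now apply derivable_pt_lim_power.
  - apply derivable_pt_lim_const.
Qed.

Lemma mono_up (f f' : R -> R) x y :
  (forall c, x <= c <= y -> derivable_pt_lim f c (f' c)) ->
  x < y -> (forall c, x < c < y -> 0 < f' c) -> f x < f y.
Proof.
  intros Hd Hxy Hp.
  destruct (MVT_cor2 f f' x y Hxy Hd) as [c [Hc1 Hc2]].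
  specialize (Hp c Hc2). nra.
Qed.

Lemma mono_down (f f' : R -> R) x y :
  (forall c, x <= c <= y -> derivable_pt_lim f c (f' c)) ->
  x < y -> (forall c, x < c < y -> f' c < 0) -> f y < f x.
Proof.
  intros Hd Hxy Hp.
  destruct (MVT_cor2 f f' x y Hxy Hd) as [c [Hc1 Hc2]].
  specialize (Hp c Hc2). nra.
Qed.

Lemma unimodal (g : R -> R) (K1 K2 c al be : R) :
  0 < al -> al < be -> 0 < K1 -> 0 < K2 -> 0 < c ->
  (forall t, g t = K1 * Rpower t al - K2 * Rpower t be - c) ->
  (exists t0, 0 < t0 /\ 0 < g t0) ->
  exists z1 z2, 0 < z1 /\ z1 < z2 /\ g z1 = 0 /\ g z2 = 0 /\
   (forall t, 0 < t -> (0 < g t <-> z1 < t < z2)) /\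
   (forall t, 0 < t -> t < z1 -> g t < 0) /\
   (forall t, z2 < t -> g t < 0) /\
   (forall t, 0 < t -> (g t = 0 <-> t = z1 \/ t = z2)).
Proof.
  intros Hal Hab HK1 HK2 Hc Hg [t0 [Ht0 Hgt0]].
  assert (Hge : g = fun x => K1 * Rpower x al - K2 * Rpower x be - c)
    by (apply functional_extensionality; exact Hg).
  set (g' := fun t => K1 * (al * Rpower t (al-1)) - K2 * (be * Rpower t (be-1))).
  assert (Hd : forall t, 0 < t -> derivable_pt_lim g t (g' t))
    by (intros t Ht; rewrite Hge; now apply dpow2).
  set (m := Rpower (al*K1/(be*K2)) (1/(be-al))).
  assert (Hm : 0 < m) by apply Rpow_pos.
  assert (Hmp : Rpower m (be - al) = al*K1/(be*K2)).
  { unfold m. rewrite Rpower_mult.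
    replace (1 / (be - al) * (be - al)) with 1 by (field; lra).
    apply Rpower_1. apply Rdiv_lt_0_compat; nra. }
  assert (Hsplit : forall t, Rpower t (be - 1) = Rpower t (al - 1) * Rpower t (be - al)).
  { intro t. rewrite <- Rpower_plus. f_equal. ring. }
  assert (Hg'e : forall t, g' t = Rpower t (al-1) * (al*K1 - be*K2*Rpower t (be-al))).
  { intro t. unfold g'. rewrite Hsplit. ring. }
  assert (Hpos : forall t, 0 < t < m -> 0 < g' t).
  { intros t Ht. rewrite Hg'e. apply Rmult_lt_0_compat; [apply Rpow_pos|].
    assert (Rpower t (be-al) < Rpower m (be-al)) by (apply Rlt_Rpower_l; lra).
    rewrite Hmp in H.
    assert (be*K2*Rpower t (be-al) < be*K2*(al*K1/(be*K2))) by (apply Rmult_lt_compat_l; nra).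
    replace (be*K2*(al*K1/(be*K2))) with (al*K1) in H0 by (field; nra). lra. }
  assert (Hneg : forall t, m < t -> g' t < 0).
  { intros t Ht. rewrite Hg'e.
    assert (Rpower m (be-al) < Rpower t (be-al)) by (apply Rlt_Rpower_l; lra).
    rewrite Hmp in H.
    assert (be*K2*(al*K1/(be*K2)) < be*K2*Rpower t (be-al)) by (apply Rmult_lt_compat_l; nra).
    replace (be*K2*(al*K1/(be*K2))) with (al*K1) in H0 by (field; nra).
    assert (0 < Rpower t (al-1)) by apply Rpow_pos. nra. }
  assert (Hinc : forall x y, 0 < x -> x < y -> y <= m -> g x < g y).
  { intros x y Hx Hxy Hy. apply (mono_up g g'); auto.
    - intros c0 Hc0. apply Hd. lra.
    - intros c0 Hc0. apply Hpos. lra. }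
  assert (Hdec : forall x y, m <= x -> x < y -> g y < g x).
  { intros x y Hx Hxy. apply (mono_down g g'); auto.
    - intros c0 Hc0. apply Hd. lra.
    - intros c0 Hc0. apply Hneg. lra. }
  assert (Hgm : 0 < g m).
  { destruct (Rtotal_order t0 m) as [H|[H|H]].
    - specialize (Hinc t0 m Ht0 H (Rle_refl _)). lra.
    - subst; auto.
    - specialize (Hdec m t0 (Rle_refl _) H). lra. }
  set (ts := Rmin (m/2) (Rpower (c/K1) (1/al) / 2)).
  assert (Hts0 : 0 < ts).
  { unfold ts. apply Rmin_glb_lt; [lra|]. pose proof (Rpow_pos (c/K1) (1/al)). lra. }
  assert (Htsm : ts < m) by (unfold ts; pose proof (Rmin_l (m/2) (Rpower (c/K1) (1/al) / 2)); lra).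
  assert (Hgts : g ts < 0).
  { rewrite Hg.
    assert (Rpower ts al < Rpower (Rpower (c/K1) (1/al)) al).
    { apply Rlt_Rpower_l; auto. split; auto.
      pose proof (Rmin_r (m/2) (Rpower (c/K1) (1/al) / 2)). pose proof (Rpow_pos (c/K1) (1/al)).
      fold ts in H. lra. }
    rewrite Rpower_mult in H. replace (1/al*al) with 1 in H by (field; lra).
    rewrite Rpower_1 in H by (apply Rdiv_lt_0_compat; lra).
    assert (K1 * Rpower ts al < K1 * (c/K1)) by (apply Rmult_lt_compat_l; lra).
    replace (K1 * (c/K1)) with c in H0 by (field; lra).
    pose proof (Rpow_pos ts be). nra. }
  set (tb := m + Rpower (K1/K2) (1/(be-al)) + 1).
  assert (Htbm : m < tb) by (unfold tb; pose proof (Rpow_pos (K1/K2) (1/(be-al))); lra).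
  assert (Hgtb : g tb < 0).
  { rewrite Hg.
    assert (Rpower (Rpower (K1/K2) (1/(be-al))) (be-al) < Rpower tb (be-al)).
    { apply Rlt_Rpower_l; [lra|]. split; [apply Rpow_pos|]. unfold tb; lra. }
    rewrite Rpower_mult in H. replace (1/(be-al)*(be-al)) with 1 in H by (field; lra).
    rewrite Rpower_1 in H by (apply Rdiv_lt_0_compat; lra).
    assert (K2 * (K1/K2) < K2 * Rpower tb (be-al)) by (apply Rmult_lt_compat_l; lra).
    replace (K2 * (K1/K2)) with K1 in H0 by (field; lra).
    assert (E : Rpower tb be = Rpower tb al * Rpower tb (be - al)).
    { rewrite <- Rpower_plus. f_equal. ring. }
    rewrite E. pose proof (Rpow_pos tb al). nra. }
  assert (Hcont : forall t, 0 < t -> continuity_pt g t).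
  { intros t Ht. apply derivable_continuous_pt. exists (g' t). now apply Hd. }
  destruct (IVT_interv g ts m) as [z1 [Hz1 Hgz1]]; auto.
  { intros a0 Ha0. apply Hcont. lra. }
  destruct (IVT_interv (fun t => - g t) m tb) as [z2 [Hz2 Hgz2]]; auto; try lra.
  { intros a0 Ha0. apply (continuity_pt_opp g). apply Hcont. lra. }
  assert (Hz1' : ts < z1 < m).
  { split; destruct (Req_dec z1 ts); destruct (Req_dec z1 m); subst; lra. }
  assert (Hz2' : m < z2 < tb).
  { split; destruct (Req_dec z2 tb); destruct (Req_dec z2 m); subst; lra. }
  assert (Hgz2' : g z2 = 0) by lra.
  assert (L1 : forall t, 0 < t -> t < z1 -> g t < 0).
  { intros t Ht Htz. specialize (Hinc t z1 Ht Htz ltac:(lra)). lra. }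
  assert (L2 : forall t, z2 < t -> g t < 0).
  { intros t Ht. specialize (Hdec z2 t ltac:(lra) Ht). lra. }
  assert (L3 : forall t, 0 < t -> (0 < g t <-> z1 < t < z2)).
  { intros t Ht. split.
    - intro Hp. split.
      + destruct (Rtotal_order t z1) as [H|[H|H]]; auto.
        * specialize (L1 t Ht H). lra.
        * subst; lra.
      + destruct (Rtotal_order t z2) as [H|[H|H]]; auto.
        * subst; lra.
        * specialize (L2 t H). lra.
    - intros [H1 H2]. destruct (Rle_lt_dec t m).
      + specialize (Hinc z1 t ltac:(lra) H1 r). lra.
      + specialize (Hdec t z2 ltac:(lra) H2). lra. }
  exists z1, z2. split; [lra|]. split; [lra|]. split; [auto|]. split; [auto|].
  split; [exact L3|]. split; [exact L1|]. split; [exact L2|].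
  intros t Ht. split.
  - intros H0.
    destruct (Rtotal_order t z1) as [H|[H|H]]; auto.
    + specialize (L1 t Ht H). lra.
    + destruct (Rtotal_order t z2) as [H'|[H'|H']]; auto.
      * assert (0 < g t) by (apply L3; lra). lra.
      * specialize (L2 t H'). lra.
  - intros [H|H]; subst; auto.
Qed.

Lemma general (f : R -> R) (A B D r p s : R) :
  0 < r -> r < p -> p < s -> 0 < A -> 0 < B -> 0 < D ->
  (forall t, f t = A * Rpower t p - B * Rpower t r - D * Rpower t s) ->
  (exists t0, 0 < t0 /\ 0 < A * Rpower t0 (p-r) - D * Rpower t0 (s-r) - B) ->
  (exists t1 t2 : R,
      0 < t1 /\ 0 < t2 /\ t1 <> t2 /\
      (forall t, 0 < t -> (derivable_pt_lim f t 0 <-> (t = t1 \/ t = t2))) /\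
      (exists eps, 0 < eps /\
         forall t, 0 < t -> Rabs (t - t1) < eps -> f t1 <= f t) /\
      f t1 < 0 /\
      (forall t, 0 < t -> f t <= f t2) /\
      0 < f t2) /\
  (exists R0 R1 : R,
      0 < R0 /\ R0 < R1 /\ f R0 = 0 /\ f R1 = 0 /\
      (forall t, 0 < t -> (0 < f t <-> (R0 < t /\ t < R1)))).
Proof.
  intros Hr Hrp Hps HA HB HD Hf Ht0.
  set (phi := fun t => A * Rpower t (p-r) - D * Rpower t (s-r) - B).
  destruct (unimodal phi A D B (p-r) (s-r)) as [z1 [z2 [Hz1 [Hz12 [Hpz1 [Hpz2 [P1 [P2 [P3 P4]]]]]]]]];
    try lra; auto.
  assert (Hfphi : forall t, f t = Rpower t r * phi t).
  { intro t. rewrite Hf. unfold phi.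
    assert (E1 : Rpower t p = Rpower t r * Rpower t (p-r))
      by (rewrite <- Rpower_plus; f_equal; ring).
    assert (E2 : Rpower t s = Rpower t r * Rpower t (s-r))
      by (rewrite <- Rpower_plus; f_equal; ring).
    rewrite E1, E2. ring. }
  assert (Hfpos : forall t, 0 < f t <-> 0 < phi t).
  { intro t. rewrite Hfphi. pose proof (Rpow_pos t r). split; intro.
    - destruct (Rle_lt_dec (phi t) 0); auto. nra.
    - nra. }
  assert (Hfneg : forall t, f t < 0 <-> phi t < 0).
  { intro t. rewrite Hfphi. pose proof (Rpow_pos t r). split; intro.
    - destruct (Rle_lt_dec 0 (phi t)); auto. nra.
    - nra. }
  assert (Hfe : f = fun x => A * Rpower x p - B * Rpower x r - D * Rpower x s)
    by (apply functional_extensionality; exact Hf).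
  set (f' := fun t => A * (p * Rpower t (p-1)) - B * (r * Rpower t (r-1)) - D * (s * Rpower t (s-1))).
  assert (Hd : forall t, 0 < t -> derivable_pt_lim f t (f' t))
    by (intros t Ht; rewrite Hfe; now apply dpow3).
  set (psi := fun t => p*A * Rpower t (p-r) - s*D * Rpower t (s-r) - r*B).
  assert (Hf'psi : forall t, f' t = Rpower t (r-1) * psi t).
  { intro t. unfold f', psi.
    assert (E1 : Rpower t (p-1) = Rpower t (r-1) * Rpower t (p-r))
      by (rewrite <- Rpower_plus; f_equal; ring).
    assert (E2 : Rpower t (s-1) = Rpower t (r-1) * Rpower t (s-r))
      by (rewrite <- Rpower_plus; f_equal; ring).
    assert (E3 : Rpower t (r-1) = Rpower t (r-1) * 1) by ring.
    rewrite E1, E2. ring. }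
  set (w := (z1 + z2) / 2).
  assert (Hw : 0 < f w) by (apply Hfpos, P1; unfold w; lra).
  assert (Hfz1 : f z1 = 0) by (rewrite Hfphi, Hpz1; ring).
  assert (Hfz2 : f z2 = 0) by (rewrite Hfphi, Hpz2; ring).
  destruct (MVT_cor2 f f' z1 w) as [cc [Hcc1 Hcc2]]; [unfold w; lra| |].
  { intros c0 Hc0. apply Hd. lra. }
  assert (Hpsicc : 0 < psi cc).
  { assert (0 < f' cc) by (rewrite Hfz1 in Hcc1; unfold w in *; nra).
    rewrite Hf'psi in H. pose proof (Rpow_pos cc (r-1)).
    destruct (Rle_lt_dec (psi cc) 0); auto. nra. }
  destruct (unimodal psi (p*A) (s*D) (r*B) (p-r) (s-r)) as [t1 [t2 [Ht1 [Ht12 [Hpt1 [Hpt2 [Q1 [Q2 [Q3 Q4]]]]]]]]];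
    try lra; try nra; auto.
  { exists cc; split; auto; lra. }
  assert (Sneg : forall t, 0 < t -> (t < t1 \/ t2 < t) -> f' t < 0).
  { intros t Ht Hor. rewrite Hf'psi. pose proof (Rpow_pos t (r-1)).
    assert (psi t < 0) by (destruct Hor; [apply Q2|apply Q3]; auto). nra. }
  assert (Spos : forall t, t1 < t < t2 -> 0 < f' t).
  { intros t Ht. rewrite Hf'psi. pose proof (Rpow_pos t (r-1)).
    assert (0 < psi t) by (apply Q1; lra). nra. }
  assert (Dec1 : forall x y, 0 < x -> x < y -> y <= t1 -> f y < f x).
  { intros x y Hx Hxy Hy. apply (mono_down f f'); auto.
    - intros c0 Hc0. apply Hd. lra.
    - intros c0 Hc0. apply Sneg; lra. }
  assert (Inc : forall x y, t1 <= x -> x < y -> y <= t2 -> f x < f y).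
  { intros x y Hx Hxy Hy. apply (mono_up f f'); auto.
    - intros c0 Hc0. apply Hd. lra.
    - intros c0 Hc0. apply Spos; lra. }
  assert (Dec2 : forall x y, t2 <= x -> x < y -> f y < f x).
  { intros x y Hx Hxy. apply (mono_down f f'); auto.
    - intros c0 Hc0. apply Hd. lra.
    - intros c0 Hc0. apply Sneg; lra. }
  assert (Neg : forall t, 0 < t -> t <= t1 -> f t < 0).
  { intros t Ht Htt1. set (u := Rmin z1 t / 2).
    assert (Hu0 : 0 < u) by (unfold u; assert (0 < Rmin z1 t) by (apply Rmin_glb_lt; lra); lra).
    assert (Hu1 : u < z1) by (unfold u; pose proof (Rmin_l z1 t); lra).
    assert (Hu2 : u < t) by (unfold u; pose proof (Rmin_r z1 t); lra).
    assert (f u < 0) by (apply Hfneg; apply P2; auto).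
    specialize (Dec1 u t Hu0 Hu2 Htt1). lra. }
  assert (Up : forall t, t1 <= t -> f t <= f t2).
  { intros t Ht. destruct (Rtotal_order t t2) as [H|[H|H]].
    - left. apply Inc; lra.
    - subst; lra.
    - left. apply Dec2; lra. }
  assert (Hft2 : 0 < f t2).
  { assert (Hw0 : 0 < w) by (unfold w; lra).
    destruct (Rle_lt_dec w t1).
    - specialize (Neg w Hw0 r0). lra.
    - specialize (Up w ltac:(lra)). lra. }
  split.
  - exists t1, t2. split; [lra|]. split; [lra|]. split; [lra|].
    split.
    { intros t Ht. split.
      - intro H. assert (f' t = 0) by (apply (uniqueness_limite f t); auto).
        rewrite Hf'psi in H0. pose proof (Rpow_pos t (r-1)).
        assert (psi t = 0).
        { destruct (Rtotal_order (psi t) 0) as [H2|[H2|H2]]; auto; nra. }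
        apply Q4; auto.
      - intro H. assert (psi t = 0) by (apply Q4; auto).
        assert (f' t = 0) by (rewrite Hf'psi, H0; ring).
        rewrite <- H1. apply Hd; auto. }
    split.
    { exists (t2 - t1). split; [lra|]. intros t Ht Habs.
      apply Rabs_def2 in Habs.
      destruct (Rtotal_order t t1) as [H|[H|H]].
      - left. apply Dec1; lra.
      - subst; lra.
      - left. apply Inc; lra. }
    split; [apply Neg; lra|].
    split; [|exact Hft2].
    intros t Ht. destruct (Rle_lt_dec t t1).
    + specialize (Neg t Ht r0). lra.
    + apply Up; lra.
  - exists z1, z2. split; [lra|]. split; [lra|]. split; [auto|]. split; [auto|].
    intros t Ht. rewrite Hfpos. apply P1; auto.
Qed.

Theorem lemma4p2 (N : nat) (p q S C a mu : R) :
  (2 <= N)%nat ->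
  1 < p -> p < INR N ->
  p < q -> q < p + p ^ 2 / INR N ->
  0 < S -> 0 < C ->
  0 < a -> 0 < mu ->
  mu * Rpower a (q * (1 - gammaq N p q)) < alpha N p q S C ->
  let h := hfun N p q S C a mu in
  (exists t1 t2 : R,
      0 < t1 /\ 0 < t2 /\ t1 <> t2 /\
      (forall t, 0 < t -> (derivable_pt_lim h t 0 <-> (t = t1 \/ t = t2))) /\
      (exists eps, 0 < eps /\
         forall t, 0 < t -> Rabs (t - t1) < eps -> h t1 <= h t) /\
      h t1 < 0 /\
      (forall t, 0 < t -> h t <= h t2) /\
      0 < h t2) /\
  (exists R0 R1 : R,
      0 < R0 /\ R0 < R1 /\ h R0 = 0 /\ h R1 = 0 /\
      (forall t, 0 < t -> (0 < h t <-> (R0 < t /\ t < R1)))).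
Proof.
  intros HN Hp1 HpN Hpq Hq HS HC Ha Hmu Hal h.
  set (Nr := INR N) in *.
  set (s := pstar N p).
  set (r := q * gammaq N p q).
  set (a' := Rpower a (q * (1 - gammaq N p q))).
  set (A := 1 / p). set (B := mu / q * C * a').
  set (SS := Rpower S (s / p)).
  set (D := 1 / (s * SS)).
  assert (HN2 : 2 <= Nr) by (unfold Nr; apply (le_INR 2 N) in HN; simpl in HN; lra).
  assert (Hr : r = Nr * (q - p) / p) by (unfold r, gammaq; fold Nr; field; lra).
  assert (Hs : s = Nr * p / (Nr - p)) by (unfold s, pstar; fold Nr; reflexivity).
  assert (Hr0 : 0 < r) by (rewrite Hr; apply Rdiv_lt_0_compat; nra).
  assert (Hrp : r < p).
  { rewrite Hr. apply (Rmult_lt_reg_r p); [lra|].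
    unfold Rdiv. rewrite Rmult_assoc, Rinv_l, Rmult_1_r by lra.
    assert (q - p < p^2 / Nr) by lra.
    apply (Rmult_lt_compat_r Nr) in H; [|lra].
    unfold Rdiv in H. rewrite Rmult_assoc, Rinv_l, Rmult_1_r in H by lra. nra. }
  assert (Hps : p < s).
  { rewrite Hs. apply (Rmult_lt_reg_r (Nr - p)); [lra|].
    unfold Rdiv. rewrite Rmult_assoc, Rinv_l, Rmult_1_r by lra. nra. }
  assert (HSS : 0 < SS) by apply Rpow_pos.
  assert (Ha' : 0 < a') by apply Rpow_pos.
  assert (HA : 0 < A) by (unfold A; apply Rdiv_lt_0_compat; lra).
  assert (HB : 0 < B) by (unfold B; apply Rmult_lt_0_compat; [apply Rmult_lt_0_compat; [apply Rdiv_lt_0_compat|]|]; lra).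
  assert (HD : 0 < D) by (unfold D; apply Rdiv_lt_0_compat; [lra|]; apply Rmult_lt_0_compat; lra).
  apply (general h A B D r p s); auto.
  set (X := s * SS * (p - r) / (p * (s - r))).
  assert (HX : 0 < X) by (unfold X; apply Rdiv_lt_0_compat; apply Rmult_lt_0_compat; try apply Rmult_lt_0_compat; lra).
  set (Y := Rpower X ((p - r) / (s - p))).
  assert (HC' : Cprime N p q S C = Y * (q * (s - p) / (p * C * (s - r)))) by reflexivity.
  assert (Hle : alpha N p q S C <= Cprime N p q S C) by apply Rmin_l.
  fold a' in Hal.
  set (t0 := Rpower X (1 / (s - p))).
  exists t0. split; [apply Rpow_pos|].
  assert (E1 : Rpower t0 (p - r) = Y).
  { unfold t0, Y. rewrite Rpower_mult. f_equal. field. lra. }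
  assert (E2 : Rpower t0 (s - r) = Y * X).
  { replace (s - r) with ((p - r) + (s - p)) by ring. rewrite Rpower_plus, E1.
    unfold t0. rewrite Rpower_mult. replace (1 / (s - p) * (s - p)) with 1 by (field; lra).
    rewrite Rpower_1; auto. }
  rewrite E1, E2.
  assert (HY : 0 < Y) by apply Rpow_pos.
  assert (Hkey : A * Y - D * (Y * X) - B = C / q * (Y * (q * (s - p) / (p * C * (s - r))) - mu * a')).
  { unfold A, D, X, B. field. repeat split; lra. }
  rewrite Hkey. apply Rmult_lt_0_compat.
  - apply Rdiv_lt_0_compat; lra.
  - lra.
Qed.
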